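(* Fix $\alpha\in\{\text{rotor routing},\ \text{Bernardi}\}$, and for a ribbon graph $(H,\sigma)$ and $u\in V(H)$ write $\alpha_u^{H}:\operatorname{Pic}^0(H)\times\mathcal T(H)\to\mathcal T(H)$ for the corresponding sandpile torsor with basepoint $u$. There exist ribbon graphs $(G,\rho)$ and $(G',\rho')$ of genera $g$ and $g'$, with $V(G)=V(G')$, together with a bijection $\varphi:\mathcal T(G)\to\mathcal T(G')$ and a group isomorphism $\gamma:\operatorname{Pic}^0(G)\to\operatorname{Pic}^0(G')$, such that for every vertex $v\in V(G)$, every $S\in\operatorname{Pic}^0(G)$ and every $T\in\mathcal T(G)$, $$\varphi\big(\alpha_v^{G}(S,T)\big)=\alpha_v^{G'}\big(\gamma(S),\varphi(T)\big),$$ and such that $g\neq g'$.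
   Context: Graphs are finite and connected, may have multiple edges, and have no loops. $\mathcal T(G)$ is the set of spanning trees of $G$ (as subsets of $E(G)$). A ribbon graph $(G,\rho)$ is a graph $G$ together with, for each vertex $u$, a cyclic order $\rho_u$ on the edges incident to $u$. $\operatorname{Div}^0(G)$ is the group of integer vectors $\sum_u n_u u$ with $\sum n_u=0$ (chip configurations); firing a vertex $u$ moves one chip from $u$ along each edge incident to $u$; $\operatorname{Pic}^0(G)=\operatorname{Div}^0(G)/\operatorname{im}(\Delta)$, where $\Delta$ is the graph Laplacian, i.e. two degree-zero divisors are equivalent iff they differ by an integer combination of firings. More generally $\operatorname{Pic}^k(G)$ is the set of degree-$k$ divisors modulo the same equivalence. Rotor routing torsor $r_v$ (basepoint $v$): for $S\in\operatorname{Pic}^0(G)$ and $T\in\mathcal T(G)$, choose a representative of $S$ with nonnegative chips at every vertex other than $v$; orient $T$ towards $v$, so each $u\neq v$ has one outgoing edge (its rotor). While some $u\neq v$ has a positive number of chips, pick such a $u$, advance its rotor to the next edge in $\rho_u$, and send one chip from $u$ along this new rotor edge to its other endpoint. When all vertices other than $v$ have zero chips, the rotors (unoriented) form a spanning tree $r_v(S,T)$; this is independent of all choices and defines a free transitive action. Bernardi torsor $\beta_v$: an edge $e$ with endpoints $u_1,u_2$ has half-edges $(e,u_1),(e,u_2)$. For $T\in\mathcal T(G)$, fix an edge $e_0$ incident to $v$ and start at the half-edge $(e_0,v)$. At current half-edge $(e',v')$: if $e'\in T$, let $w'$ be the other endpoint of $e'$ and move to $(e'',w')$ where $e''$ follows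 $e'$ in $\rho_{w'}$; if $e'\notin T$, move to $(\tilde e,v')$ where $\tilde e$ follows $e'$ in $\rho_{v'}$, and place a chip on $v'$ if the other half-edge of $e'$ has not yet been visited. Stop on returning to $(e_0,v)$. The resulting divisor $D_T$ has degree $|E(G)|-|V(G)|+1=:k$; the classes $[D_T]\in\operatorname{Pic}^k(G)$ are distinct for distinct $T$ and exhaust $\operatorname{Pic}^k(G)$, and $\beta_v(S,T)$ is the unique $T'$ with $[D_{T'}]=[D_T]+S$ (independent of $e_0$). Genus: a cycle (face) of $(G,\rho)$ is a closed walk such that whenever it enters a vertex $u$ along an edge $e$ it leaves along the edge following $e$ in $\rho_u$; equivalently an orbit of the permutation of half-edges sending (edge $e$ leaving $u$ towards $u'$) to (edge following $e$ in $\rho_{u'}$, leaving $u'$). With $\operatorname{cyc}(G,\rho)$ the number of cycles, the genus $g$ of $(G,\rho)$ (the genus of the associated closed surface) satisfies $2g=2-|V(G)|+|E(G)|-\operatorname{cyc}(G,\rho)$. *)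

(* Defs.v *)
From mathcomp Require Import all_boot all_order all_algebra.
From Stdlib Require Import ClassicalEpsilon Relations.
Set Implicit Arguments.
Unset Strict Implicit.
Unset Printing Implicit Defensive.
Import GRing.Theory Num.Theory.
Local Open Scope ring_scope.

(* Edge e has endpoints (ends e).1 and (ends e).2.  Half-edges are E * bool:  *)
(* (e,false) is e at (ends e).1, (e,true) is e at (ends e).2.  Since graphs   *)
(* are loopless, an edge incident to u has exactly one half-edge at u, so the *)
(* cyclic order rho_u on edges at u is encoded by the permutation [rot] of    *)
(* half-edges: rot h is the half-edge (at the same vertex) of the edge        *)
(* following the edge of h in rho_u.                                          *)

Record ribbon_graph (V E : finType) := RibbonGraph {
  ends : E -> V * V;
  rot  : E * bool -> E * bool
}.

Section RibbonGraphs.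
Variables (V E : finType).
Implicit Types (G : ribbon_graph V E) (T : {set E}) (D : {ffun V -> int}).

Definition flip (h : E * bool) : E * bool := (h.1, ~~ h.2).

Definition hv G (h : E * bool) : V :=
  if h.2 then (ends G h.1).2 else (ends G h.1).1.

Definition adjF G (F : {set E}) : rel V :=
  fun x y => [exists e in F, (ends G e == (x, y)) || (ends G e == (y, x))].

Definition is_ribbon_graph G : Prop :=
  [/\ (0 < #|V|)%N,
      (forall e : E, (ends G e).1 != (ends G e).2),
      (forall x y : V, connect (adjF G setT) x y),
      injective (rot G) &
      (forall h, hv G (rot G h) = hv G h) /\
      (forall h h', hv G h = hv G h' -> fconnect (rot G) h h')].

Definition spanning_tree G T : bool :=
  (#|T| == #|V|.-1)%N && [forall x, forall y, connect (adjF G T) x y].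

Definition deg_div D : int := \sum_(u : V) D u.

Definition mult G (u w : V) : nat :=
  #|[set e : E | (ends G e == (u, w)) || (ends G e == (w, u))]|.
Definition vdeg G (u : V) : nat :=
  #|[set e : E | ((ends G e).1 == u) || ((ends G e).2 == u)]|.

Definition lap G (u w : V) : int :=
  if w == u then - (vdeg G u)%:Z else (mult G u w)%:Z.

Definition div_equiv G D1 D2 : Prop :=
  exists c : {ffun V -> int},
    forall w, D1 w - D2 w = \sum_(u : V) c u * lap G u w.

(* half-edge h (at vertex hv h) lies on T and points towards v along T *)
Definition oriented_toward G T (v : V) (h : E * bool) : bool :=
  (h.1 \in T) && connect (adjF G (T :\ h.1)) (hv G (flip h)) v.

Definition rr_state := ({ffun V -> int} * {ffun V -> E * bool})%type.

Definition rr_step G (v : V) (s s' : rr_state) : Prop :=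
  exists u : V, [/\ u != v, 0 < s.1 u &
    let h := rot G (s.2 u) in
    let w := hv G (flip h) in
    s'.2 = [ffun x => if x == u then h else s.2 x] /\
    s'.1 = [ffun x => s.1 x - (x == u)%:Z + (x == w)%:Z]].

Definition rr_steps G v := clos_refl_trans rr_state (rr_step G v).

Definition rotor_result G (v : V) D T (T' : {set E}) : Prop :=
  exists s0 s1 : rr_state,
    [/\ div_equiv G s0.1 D,
        (forall u, u != v -> 0 <= s0.1 u) &
        (forall u, u != v -> (hv G (s0.2 u) == u) && oriented_toward G T v (s0.2 u))] /\
    [/\ rr_steps G v s0 s1,
        (forall u, u != v -> s1.1 u = 0) &
        T' = [set e | [exists u, (u != v) && ((s1.2 u).1 == e)]]].

(* the rotor routing torsor r_v(S,T) (well defined by the paper's facts) *)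
Definition rotor_torsor G (v : V) D T : {set E} :=
  epsilon (inhabits T) (rotor_result G v D T).

Definition bern_step G T (h : E * bool) : E * bool :=
  if h.1 \in T then rot G (flip h) else rot G h.

Definition bern_div G (v : V) T : {ffun V -> int} :=
  match [pick h : E * bool | hv G h == v] with
  | None => [ffun => 0]
  | Some h0 =>
      let s := orbit (bern_step G T) h0 in
      [ffun u => (\sum_(i < size s |
                    let h := nth h0 s i in
                    [&& h.1 \notin T, hv G h == u & flip h \notin take i s]) 1%N)%:Z]
  end.

Definition bernardi_result G (v : V) D T (T' : {set E}) : Prop :=
  spanning_tree G T' /\ div_equiv G (bern_div G v T') (bern_div G v T + D).

Definition bernardi_torsor G (v : V) D T : {set E} :=
  epsilon (inhabits T) (bernardi_result G v D T).

(* face permutation: (e leaving u towards u') |-> (next edge after e at u') *)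
Definition face G (h : E * bool) : E * bool := rot G (flip h).

Definition ncycles G : nat := #|[set h | froot (face G) h == h]|.

Definition genus G : nat := (((2 + #|E|) - (#|V| + ncycles G))./2)%N.

End RibbonGraphs.

Inductive torsor_kind := RotorRouting | Bernardi.

Definition torsor (k : torsor_kind) {V E : finType} (G : ribbon_graph V E)
  (v : V) (D : {ffun V -> int}) (T : {set E}) : {set E} :=
  match k with
  | RotorRouting => rotor_torsor G v D T
  | Bernardi => bernardi_torsor G v D T
  end.

(* Main.v *)
Require Import Defs.
From mathcomp Require Import all_boot all_order all_algebra.
From mathcomp Require Import zify.
From Stdlib Require Import ClassicalEpsilon FunctionalExtensionality PropExtensionality Relations.
Import GRing.Theory Num.Theory.

Definition o5 (k : nat) : 'I_5 := Ordinal (ltn_pmod k (erefl true : (0 < 5)%N)).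
Definition o2 (k : nat) : 'I_2 := Ordinal (ltn_pmod k (erefl true : (0 < 2)%N)).
Definition Af (e : 'I_5) : 'I_5 := o5 (nat_of_ord e).+1.
Definition Bf (e : 'I_5) : 'I_5 := o5 (nth 0%N [:: 1; 3; 0; 4; 2]%N e).
Definition A3f (e : 'I_5) : 'I_5 := o5 (nth 0%N [:: 3; 4; 0; 1; 2]%N e).
Definition B3f (e : 'I_5) : 'I_5 := o5 (nth 0%N [:: 4; 2; 3; 0; 1]%N e).
Definition ends0 (e : 'I_5) : 'I_2 * 'I_2 := (o2 0, o2 1).
Definition mkrot (fa fb : 'I_5 -> 'I_5) (h : 'I_5 * bool) : 'I_5 * bool :=
  (if h.2 then fb h.1 else fa h.1, h.2).
Definition Gr fa fb := RibbonGraph ends0 (mkrot fa fb).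

Lemma ord5P (P : 'I_5 -> Prop) : (forall k, (k < 5)%N -> P (o5 k)) -> forall i, P i.
Proof.
move=> H i; have := H _ (ltn_ord i).
by have -> : o5 i = i by apply: val_inj; rewrite /= modn_small.
Qed.
Lemma ord2P (P : 'I_2 -> Prop) : (forall k, (k < 2)%N -> P (o2 k)) -> forall i, P i.
Proof.
move=> H i; have := H _ (ltn_ord i).
by have -> : o2 i = i by apply: val_inj; rewrite /= modn_small.
Qed.

Local Open Scope ring_scope.

Lemma sum2 (F : 'I_2 -> int) : \sum_(u : 'I_2) F u = F (o2 0) + F (o2 1).
Proof.
rewrite big_ord_recl big_ord1; congr (F _ + F _); exact: val_inj.
Qed.

Lemma deg2 (D : {ffun 'I_2 -> int}) : deg_div D = D (o2 0) + D (o2 1).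
Proof. by rewrite /deg_div sum2. Qed.

Lemma iter_mod5 (R : 'I_5 -> 'I_5) : (forall x, iter 5 R x = x) ->
  forall n x, iter n R x = iter (n %% 5) R x.
Proof.
move=> H n x; rewrite {1}(divn_eq n 5) iterD.
elim: (n %/ 5)%N (iter (n %% 5) R x) => [|q IH] y; first by rewrite mul0n.
by rewrite mulSn iterD IH H.
Qed.

Section Gr.
Variables fa fb : 'I_5 -> 'I_5.
Local Notation G := (Gr fa fb).

Lemma hvE h : hv G h = if h.2 then o2 1 else o2 0.
Proof. by rewrite /hv; case: h.2. Qed.

Lemma vdegE u : vdeg G u = 5%N.
Proof.
rewrite /vdeg (_ : [set e | _] = setT) ?cardsT ?card_ord //.
apply/setP=> e; rewrite !inE /=.
by move: u; apply: ord2P => -[|[|k]].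
Qed.

Lemma multE u w : u != w -> mult G u w = 5%N.
Proof.
move=> uw; rewrite /mult (_ : [set e | _] = setT) ?cardsT ?card_ord //.
apply/setP=> e; rewrite !inE /=.
move: u w uw; apply: ord2P => -[|[|k]] // _; apply: ord2P => -[|[|j]] //.
Qed.

Lemma lapE u w : lap G u w = if w == u then -5 else 5.
Proof.
rewrite /lap; case: (w =P u) => [wu|/eqP wu]; first by rewrite vdegE.
by rewrite multE // eq_sym.
Qed.

Lemma div_char X Y : div_equiv G X Y <->
  X (o2 0) + X (o2 1) = Y (o2 0) + Y (o2 1) /\ exists q : int, X (o2 1) - Y (o2 1) = q * 5.
Proof.
split.
  case=> c H; have H0 := H (o2 0); have H1 := H (o2 1).
  rewrite !sum2 !lapE /= in H0 H1.
  move: H0 H1; move: (X (o2 0)) (X (o2 1)) (Y (o2 0)) (Y (o2 1)) (c (o2 0)) (c (o2 1)) => a b d e f g H0 H1.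
  split; first by lia.
  by exists (f - g); lia.
case=> Hs [q Hq]; exists [ffun u => if u == o2 0 then q else 0].
apply: ord2P => -[|[|k]] // _; rewrite sum2 !lapE !ffunE /=;
  move: Hs Hq; move: (X (o2 0)) (X (o2 1)) (Y (o2 0)) (Y (o2 1)) => a b d e; lia.
Qed.


Lemma o2_neq : o2 0 != o2 1. Proof. by []. Qed.

Lemma hv_eq_side h h' : hv G h = hv G h' -> h.2 = h'.2.
Proof. by rewrite !hvE; case: h.2; case: h'.2. Qed.

Lemma hv_flip h : hv G (flip h) != hv G h.
Proof. by rewrite !hvE /=; case: h.2. Qed.

Lemma hv_rot h : hv G (Defs.rot G h) = hv G h.
Proof. by rewrite !hvE. Qed.

Lemma hv_iter_rot n h : hv G (iter n (Defs.rot G) h) = hv G h.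
Proof. by elim: n => //= n IH; rewrite hv_rot. Qed.

Lemma iter_rot n e b :
  iter n (Defs.rot G) (e, b) = (iter n (if b then fb else fa) e, b).
Proof. elim: n => //= n IH; rewrite IH {IH}; by case: b. Qed.

Lemma other2 (x u v : 'I_2) : x != v -> u != v -> x = u.
Proof.
move: x u v; apply: ord2P => -[|[|a]] // _; apply: ord2P => -[|[|b]] // _;
  apply: ord2P => -[|[|c]] //.
Qed.

Arguments other2 {x u v}.

Lemma adj2 (F : {set 'I_5}) e (x y : 'I_2) : e \in F -> x != y -> adjF G F x y.
Proof.
move=> eF; move: x y; apply: ord2P => -[|[|a]] // _; apply: ord2P => -[|[|b]] // _ _;
  by apply/existsP; exists e; rewrite eF.
Qed.

Lemma conn2 (F : {set 'I_5}) e (x y : 'I_2) : e \in F -> connect (adjF G F) x y.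
Proof.
move=> eF; case: (x =P y) => [->|/eqP xy]; first exact: connect0.
by apply: connect1; apply: adj2 eF xy.
Qed.

Lemma spanE T : spanning_tree G T = (#|T| == 1%N).
Proof.
rewrite /spanning_tree card_ord /=.
case: cards1P => [[t ->]|]; last by [].
rewrite andTb; apply/forallP=> x; apply/forallP=> y.
by apply: (@conn2 _ t); rewrite in_set1.
Qed.

Lemma ribbon_ok : injective fa -> injective fb ->
  (forall e e', fconnect fa e e') -> (forall e e', fconnect fb e e') ->
  is_ribbon_graph G.
Proof.
move=> ia ib ca cb; split.
- by rewrite card_ord.
- by [].
- by move=> x y; apply: (@conn2 _ (o5 0)); rewrite inE.
- move=> [e b] [e' b'] /= [] + eb; subst b'; case: b => /=.
    by move/ib => ->.
  by move/ia => ->.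
split; first exact: hv_rot.
move=> [e b] [e' b'] /hv_eq_side /= <-.
have [n <-] : exists n, iter n (if b then fb else fa) e = e'.
  by case: b; [exists (findex fb e e'); apply: iter_findex | exists (findex fa e e'); apply: iter_findex].
rewrite -iter_rot; exact: fconnect_iter.
Qed.

Lemma rr_inv v s s' : rr_steps G v s s' -> forall u, u != v -> hv G (s.2 u) = u ->
  exists k : nat, s'.2 u = iter k (Defs.rot G) (s.2 u) /\ s'.1 u = s.1 u - k%:Z.
Proof.
elim=> {s s'}.
- move=> s s' [x [xv _ [E2 E1]]] u uv hu.
  have xu := other2 xv uv; subst x.
  exists 1%N; rewrite E2 E1 !ffunE eqxx /=; split=> //.
  have -> : (u == hv G (flip (Defs.rot G (s.2 u)))) = false.
    apply/negbTE; rewrite eq_sym; move: (hv_flip (Defs.rot G (s.2 u))).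
    by rewrite hv_rot hu.
  by rewrite addr0.
- by move=> s u _ _; exists 0%N; rewrite subr0.
- move=> s1 s2 s3 _ IH1 _ IH2 u uv hu.
  have [k1 [E1 F1]] := IH1 u uv hu.
  have hu2 : hv G (s2.2 u) = u by rewrite E1 hv_iter_rot.
  have [k2 [E2 F2]] := IH2 u uv hu2.
  exists (k2 + k1)%N; rewrite iterD -E1 E2 F2 F1; split=> //.
  rewrite PoszD; lia.
Qed.

Arguments rr_inv {v s s'}.

Definition Ru (u : 'I_2) := if u == o2 1 then fb else fa.

Lemma rotor_unique v D t T' u : u != v -> rotor_result G v D [set t] T' ->
  exists k : nat, T' = [set iter k (Ru u) t] /\ exists q : int, k%:Z - D u = q * 5.
Proof.
move=> uv [s0 [s1 [[Heq Hnn Hrot] [Hst Hfin HT]]]].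
have /andP[/eqP hu /andP[ht _]] := Hrot u uv.
have Hs0 : s0.2 u = (t, u == o2 1).
  move: hu ht; case: (s0.2 u) => e b; rewrite in_set1 hvE /= => + /eqP ->.
  by move: u uv => + _; apply: ord2P => -[|[|a]] //; case: b.
have [k [E1 F1]] := rr_inv Hst u uv hu.
have k0 : s0.1 u = k%:Z by move: (Hfin u uv); rewrite F1; lia.
exists k; split.
  rewrite HT; apply/setP=> e; rewrite !inE; apply/existsP/eqP.
    by case=> x /andP[xv /eqP <-]; rewrite (other2 xv uv) E1 Hs0 iter_rot.
  by move=> ->; exists u; rewrite uv E1 Hs0 iter_rot eqxx.
have [Hsum [q Hq]] := (div_char s0.1 D).1 Heq.
move: k0 Hsum Hq; clear hu Hs0 E1 F1 HT Hrot Hfin Hnn Hst Heq ht; move: u uv => + _; apply: ord2P => -[|[|a]] // _ k0 Hsum Hq.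
  exists (-q); move: k0 Hsum Hq; move: (s0.1 (o2 0)) (s0.1 (o2 1)) (D (o2 0)) (D (o2 1)) => a b c d.
  lia.
exists q; move: k0 Hsum Hq; move: (s0.1 (o2 0)) (s0.1 (o2 1)) (D (o2 0)) (D (o2 1)) => a b c d.
lia.
Qed.

Lemma rr_run v u (k : nat) (s : rr_state 'I_2 'I_5) : u != v -> s.1 u = k%:Z -> hv G (s.2 u) = u ->
  exists s1, rr_steps G v s s1 /\ s1.1 u = 0 /\ s1.2 u = iter k (Defs.rot G) (s.2 u).
Proof.
move=> uv; elim: k s => [|k IH] s Hk hu; first by exists s; split; [apply: rt_refl | split].
pose h := Defs.rot G (s.2 u); pose w := hv G (flip h).
pose s' : rr_state 'I_2 'I_5 :=
  ([ffun x => s.1 x - (x == u)%:Z + (x == w)%:Z], [ffun x => if x == u then h else s.2 x]).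
have uw : (u == w) = false.
  apply/negbTE; rewrite eq_sym /w; move: (hv_flip h); by rewrite /h hv_rot hu.
have H1' : s'.1 u = k%:Z by rewrite /s' /= ffunE eqxx uw Hk addr0; lia.
have H2' : hv G (s'.2 u) = u by rewrite /s' /= ffunE eqxx /h hv_rot.
have [s1 [Hst [H1 H2]]] := IH s' H1' H2'.
exists s1; split; last split=> //.
  apply: rt_trans Hst; apply: rt_step; exists u; split=> //.
  by rewrite Hk.
by rewrite H2 /s' /= ffunE eqxx /h -iterSr.
Qed.

Arguments rr_run {v u k s}.

Lemma hv_side t u : hv G (t, u == o2 1) = u.
Proof. by rewrite hvE /=; move: u; apply: ord2P => -[|[|a]]. Qed.

Lemma hv_flip_side t u v : u != v -> hv G (flip (t, u == o2 1)) = v.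
Proof.
rewrite hvE /=; move: u v; apply: ord2P => -[|[|a]] // _; apply: ord2P => -[|[|b]] //.
Qed.

Lemma s0_equiv u v D (k : nat) q : u != v -> deg_div D = 0 -> k%:Z - D u = q * 5 ->
  div_equiv G [ffun x => if x == u then k%:Z else - k%:Z] D.
Proof.
move=> uv; rewrite deg2 => Hd Hq; apply/div_char; rewrite !ffunE.
move: u v uv Hq; apply: ord2P => -[|[|a]] // _; apply: ord2P => -[|[|b]] // _ _ Hq /=;
  move: Hq Hd; move: (D (o2 0)) (D (o2 1)) => c d Hq Hd.
- by split; [lia | exists (-q); lia].
- by split; [lia | exists q; lia].
Qed.

Lemma rotor_exists v D t u (k : nat) : u != v -> deg_div D = 0 ->
  (exists q : int, k%:Z - D u = q * 5) ->
  rotor_result G v D [set t] [set iter k (Ru u) t].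
Proof.
move=> uv Hd [q Hq].
pose s0 : rr_state 'I_2 'I_5 :=
  ([ffun x => if x == u then k%:Z else - k%:Z], [ffun x => (t, x == o2 1)]).
have hu : hv G (s0.2 u) = u by rewrite /s0 /= ffunE hv_side.
have Hk : s0.1 u = k%:Z by rewrite /s0 /= ffunE eqxx.
have [s1 [Hst [H1 H2]]] := rr_run uv Hk hu.
exists s0, s1; split; split.
- exact: s0_equiv uv Hd Hq.
- by move=> x xv; rewrite (other2 xv uv) Hk.
- move=> x xv; rewrite (other2 xv uv) hu eqxx /= /oriented_toward.
  rewrite /s0 /= ffunE in_set1 eqxx /= (hv_flip_side t u v uv).
  exact: connect0.
- exact: Hst.
- by move=> x xv; rewrite (other2 xv uv).
- apply/setP=> e; rewrite !inE; apply/eqP/existsP.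
    by move=> ->; exists u; rewrite uv H2 /s0 /= ffunE iter_rot /Ru eqxx.
  by case=> x /andP[xv /eqP <-]; rewrite (other2 xv uv) H2 /s0 /= ffunE iter_rot.
Qed.

Lemma rotor_val v D t u k : u != v -> deg_div D = 0 ->
  (exists q : int, k%:Z - D u = q * 5) -> (forall x, iter 5 (Ru u) x = x) ->
  rotor_torsor G v D [set t] = [set iter k (Ru u) t].
Proof.
move=> uv Hd Hk Hp; rewrite /rotor_torsor.
have := epsilon_spec (inhabits [set t]) _ (ex_intro _ _ (rotor_exists v D t u k uv Hd Hk)).
case/(rotor_unique v D t _ u uv) => k' [-> [q' Hq']].
case: Hk => q Hq.
rewrite (@iter_mod5 _ Hp k') (@iter_mod5 _ Hp k).
have -> : (k' %% 5 = k %% 5)%N by move: Hq Hq'; move: (D u) => d; lia.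
by [].
Qed.

End Gr.

Lemma bd_eq (G : ribbon_graph 'I_2 'I_5) v t h0 p u :
  [pick h | hv G h == v] = Some h0 ->
  fcycle (fun h => if h.1 == t then Defs.rot G (flip h) else Defs.rot G h) (h0 :: p) ->
  uniq (h0 :: p) ->
  bern_div G v [set t] u = (count (fun i : nat => let h := nth h0 (h0 :: p) i in
     [&& h.1 != t, hv G h == u & flip h \notin take i (h0 :: p)]) (iota 0 (size p).+1))%:Z.
Proof.
move=> Hp Hc Hu; rewrite /bern_div Hp ffunE.
have -> : bern_step G [set t] =
    (fun h => if h.1 == t then Defs.rot G (flip h) else Defs.rot G h).
  by apply: functional_extensionality => h; rewrite /bern_step in_set1.
rewrite (orbitE Hc Hu (mem_head _ _)) /= eqxx rot0.
rewrite -(big_mkord (fun i => let h := nth h0 (h0::p) i in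
   [&& h.1 \notin [set t], hv G h == u & flip h \notin take i (h0::p)]) (fun _ => 1%N)).
rewrite sum1_count /index_iota subn0; congr Posz.
by apply: eq_count => i; rewrite /= in_set1.
Qed.

Definition bstep fa fb (t : 'I_5) (h : 'I_5 * bool) :=
  if h.1 == t then mkrot fa fb (flip h) else mkrot fa fb h.
Definition tour fa fb (v : 'I_2) (e0 t : 'I_5) :=
  traject (bstep fa fb t) (e0, v == o2 1) 10.
Definition cnt fa fb (v : 'I_2) (e0 t : 'I_5) (u : 'I_2) : nat :=
  let s := tour fa fb v e0 t in
  count (fun i : nat => let h := nth (e0, v == o2 1) s i in
     [&& h.1 != t, hv (Gr fa fb) h == u & flip h \notin take i s]) (iota 0 10).
Definition allI2 (P : 'I_2 -> bool) := all (fun k => P (o2 k)) (iota 0 2).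
Definition allI5 (P : 'I_5 -> bool) := all (fun k => P (o5 k)) (iota 0 5).
Definition check1 fa fb := allI2 (fun v => allI5 (fun e0 => allI5 (fun t =>
  let s := tour fa fb v e0 t in fcycle (bstep fa fb t) s && uniq s))).
Lemma check1G : check1 Af Bf. Proof. by vm_compute. Qed.
Lemma check1G' : check1 A3f B3f. Proof. by vm_compute. Qed.

Lemma o2_val (v : 'I_2) : o2 v = v.
Proof. by apply: val_inj; rewrite /= modn_small. Qed.
Lemma o5_val (v : 'I_5) : o5 v = v.
Proof. by apply: val_inj; rewrite /= modn_small. Qed.

Lemma allI2P P : allI2 P -> forall v, P v.
Proof.
move=> /allP H v; have := H (val v); rewrite mem_iota ltn_ord o2_val; exact.
Qed.
Lemma allI5P P : allI5 P -> forall v, P v.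
Proof.
move=> /allP H v; have := H (val v); rewrite mem_iota ltn_ord o5_val; exact.
Qed.

Arguments allI2P {P}.
Arguments allI5P {P}.

Lemma pick_ex fa fb v : exists e0, [pick h | hv (Gr fa fb) h == v] = Some (e0, v == o2 1).
Proof.
case: pickP => [[e b] /eqP H|H].
  exists e; congr (Some (_, _)); move: H; rewrite hvE /= => <-; by case: b.
by have := H (o5 0, v == o2 1); rewrite hv_side eqxx.
Qed.

Lemma bd_val fa fb v e0 t u : check1 fa fb ->
  [pick h | hv (Gr fa fb) h == v] = Some (e0, v == o2 1) ->
  bern_div (Gr fa fb) v [set t] u = (cnt fa fb v e0 t u)%:Z.
Proof.
move=> C Hp; move: C; rewrite /check1 => C.
have /andP[Hc Hu] := allI5P (allI5P (allI2P C v) e0) t.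
rewrite (@bd_eq (Gr fa fb) v t (e0, v == o2 1)
  (traject (bstep fa fb t) (bstep fa fb t (e0, v == o2 1)) 9) u Hp Hc Hu).
by [].
Qed.

Lemma inj5 (f : 'I_5 -> 'I_5) :
  allI5 (fun x => allI5 (fun y => (f x == f y) ==> (x == y))) -> injective f.
Proof. by move=> H x y /eqP; have := allI5P (allI5P H x) y => /implyP /[apply] /eqP. Qed.

Lemma conn5 (f : 'I_5 -> 'I_5) : fcycle f (traject f (o5 0) 5) ->
  allI5 (fun e => e \in traject f (o5 0) 5) -> forall e e', fconnect f e e'.
Proof.
move=> Hc Hin e e'; rewrite (fconnect_cycle Hc (allI5P Hin e)); exact: (allI5P Hin e').
Qed.

Lemma ribbonG : is_ribbon_graph (Gr Af Bf).
Proof.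
apply: ribbon_ok; try apply: inj5; try apply: conn5; by vm_compute.
Qed.
Lemma ribbonG' : is_ribbon_graph (Gr A3f B3f).
Proof.
apply: ribbon_ok; try apply: inj5; try apply: conn5; by vm_compute.
Qed.

Lemma inj_face fa fb : injective fa -> injective fb -> injective (face (Gr fa fb)).
Proof.
move=> ia ib [e b] [e' b'] /=; rewrite /face /flip /= => -[] + eb.
move/negb_inj: eb => eb; subst b'; case: b => /=; [move/ia | move/ib] => ->; by [].
Qed.

Lemma ncycles_one (G : ribbon_graph 'I_2 'I_5) h1 : injective (face G) ->
  (forall h, fconnect (face G) h1 h) -> ncycles G = 1%N.
Proof.
move=> inj Hc; have sym := fconnect_sym inj.
rewrite /ncycles (_ : [set h | _] = [set froot (face G) h1]) ?cards1 //.
apply/setP=> h; rewrite !inE; apply/eqP/eqP => [<-|->]; last exact: root_root.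
apply/(fingraph.rootP sym); rewrite sym; exact: Hc.
Qed.

Lemma ncycles_two (G : ribbon_graph 'I_2 'I_5) h1 h2 : injective (face G) ->
  ~~ fconnect (face G) h1 h2 -> (1 < ncycles G)%N.
Proof.
move=> inj Hn; have sym := fconnect_sym inj.
apply/card_gt1P; exists (froot (face G) h1), (froot (face G) h2).
rewrite !inE !root_root //; split=> //; apply/eqP => /(fingraph.rootP sym) H.
by rewrite H in Hn.
Qed.

Definition h00 : 'I_5 * bool := (o5 0, false).

Lemma genusG : genus (Gr Af Bf) = 2%N.
Proof.
rewrite /genus !card_ord (@ncycles_one _ h00) //.
  by apply: inj_face; apply: inj5; vm_compute.
move=> [e b].
have Hc : fcycle (face (Gr Af Bf)) (traject (face (Gr Af Bf)) h00 10) by vm_compute.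
rewrite (fconnect_cycle Hc (mem_head _ _)).
have H : allI5 (fun e => ((e, false) \in traject (face (Gr Af Bf)) h00 10) &&
                        ((e, true) \in traject (face (Gr Af Bf)) h00 10)) by vm_compute.
by have /andP[] := allI5P H e; case: b.
Qed.

Lemma genusG' : (genus (Gr A3f B3f) <= 1)%N.
Proof.
have H2 : (1 < ncycles (Gr A3f B3f))%N.
  apply: (@ncycles_two _ h00 (o5 0, true)).
    by apply: inj_face; apply: inj5; vm_compute.
  have Hc : fcycle (face (Gr A3f B3f)) (traject (face (Gr A3f B3f)) h00 6) by vm_compute.
  by rewrite (fconnect_cycle Hc (mem_head _ _)); vm_compute.
rewrite /genus !card_ord.
have : (7 - (2 + ncycles (Gr A3f B3f)) <= 3)%N by lia.
by move/half_leq.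
Qed.

Definition gam (D : {ffun 'I_2 -> int}) : {ffun 'I_2 -> int} := [ffun u => 2 * D u].
Definition ot (v : 'I_2) : 'I_2 := if v == o2 0 then o2 1 else o2 0.
Lemma ot_neq v : ot v != v.
Proof. by move: v; apply: ord2P => -[|[|a]]. Qed.

Lemma rep5 (d : int) : exists k : nat, exists q : int, k%:Z - d = q * 5.
Proof.
exists (absz (d %% 5)%Z), (- (d %/ 5)%Z).
rewrite gez0_abs ?modz_ge0 //; rewrite {2}(divz_eq d 5).
move: (d %/ 5)%Z (d %% 5)%Z => a b; lia.
Qed.

Lemma perA x : iter 5 Af x = x. Proof. apply/eqP; move: x; apply: allI5P; by vm_compute. Qed.
Lemma perB x : iter 5 Bf x = x. Proof. apply/eqP; move: x; apply: allI5P; by vm_compute. Qed.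
Lemma perA3 x : iter 5 A3f x = x. Proof. apply/eqP; move: x; apply: allI5P; by vm_compute. Qed.
Lemma perB3 x : iter 5 B3f x = x. Proof. apply/eqP; move: x; apply: allI5P; by vm_compute. Qed.
Lemma A3E x : A3f x = iter 3 Af x. Proof. apply/eqP; move: x; apply: allI5P; by vm_compute. Qed.
Lemma B3E x : B3f x = iter 3 Bf x. Proof. apply/eqP; move: x; apply: allI5P; by vm_compute. Qed.

Lemma Ru_per fa fb u : (forall x, iter 5 fa x = x) -> (forall x, iter 5 fb x = x) ->
  forall x, iter 5 (Ru fa fb u) x = x.
Proof. by rewrite /Ru; case: (u == o2 1). Qed.

Lemma bern_arith (a b a' b' a0 b0 a0' b0' : nat) (d0 d1 : int) :
  ((a' + 2 * b) %% 5 = (b' + 2 * a) %% 5)%N -> (a0 + a = 4)%N -> (b0 + b = 4)%N ->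
  (a0' + a' = 4)%N -> (b0' + b' = 4)%N -> d0 + d1 = 0 ->
  ((a0%:Z + a%:Z = (b0%:Z + d0) + (b%:Z + d1)) /\ exists q : int, a%:Z - (b%:Z + d1) = q * 5) <->
  ((a0'%:Z + a'%:Z = (b0'%:Z + 2 * d0) + (b'%:Z + 2 * d1)) /\
    exists q : int, a'%:Z - (b'%:Z + 2 * d1) = q * 5).
Proof.
move=> Hm Ha Hb Ha' Hb' Hd.
pose K : int := ((a' + 2 * b) %/ 5)%N%:Z - ((b' + 2 * a) %/ 5)%N%:Z.
have HK : a'%:Z + 2 * b%:Z - (b'%:Z + 2 * a%:Z) = K * 5.
  rewrite /K; have E1 := divn_eq (a' + 2 * b) 5; have E2 := divn_eq (b' + 2 * a) 5.
  move: E1 E2 Hm; move: ((a' + 2 * b) %/ 5)%N ((b' + 2 * a) %/ 5)%N => x y; lia.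
split=> -[_ [q Hq]]; split; try lia.
  by exists (2 * q + K); lia.
by exists (3 * q - 3 * K - (a%:Z - (b%:Z + d1))); lia.
Qed.


Lemma bd_valF fa fb v e0 t : check1 fa fb ->
  [pick h | hv (Gr fa fb) h == v] = Some (e0, v == o2 1) ->
  bern_div (Gr fa fb) v [set t] = [ffun u => (cnt fa fb v e0 t u)%:Z].
Proof. by move=> C Hp; apply/ffunP => u; rewrite ffunE (bd_val _ _ _ _ _ _ C Hp). Qed.

Lemma bern_pred_eq fa fb fa' fb' : check1 fa fb -> check1 fa' fb' ->
  (forall v e0 t t',
    [/\ ((cnt fa' fb' v e0 t' (o2 1) + 2 * cnt fa fb v e0 t (o2 1)) %% 5 =
         (cnt fa' fb' v e0 t (o2 1) + 2 * cnt fa fb v e0 t' (o2 1)) %% 5)%N,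
        (cnt fa fb v e0 t (o2 0) + cnt fa fb v e0 t (o2 1) = 4)%N &
        (cnt fa' fb' v e0 t (o2 0) + cnt fa' fb' v e0 t (o2 1) = 4)%N]) ->
  forall v t D, deg_div D = 0 ->
  bernardi_result (Gr fa' fb') v (gam D) [set t] = bernardi_result (Gr fa fb) v D [set t].
Proof.
move=> C1 C2 K v t D Hd.
apply: functional_extensionality => T'; apply: propositional_extensionality.
rewrite /bernardi_result !spanE.
case: (boolP (#|T'| == 1%N)) => [/cards1P [t' ->]|nT]; last first.
  by split=> -[] H; move: nT; rewrite H.
have [e0 Hp] := pick_ex fa fb v.
have Hp' : [pick h | hv (Gr fa' fb') h == v] = Some (e0, v == o2 1) := Hp.
have [K1 K2 K3] := K v e0 t t'.
have [_ K4 K5] := K v e0 t' t.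
move: Hd; rewrite deg2 => Hd.
have Hb := @bern_arith _ _ _ _ _ _ _ _ _ _ K1 K4 K2 K5 K3 Hd.
have EG : forall u, gam D u = 2 * D u by move=> u; rewrite /gam ffunE.
move: (gam D) EG => GD EG.
have addf : forall (f g : {ffun 'I_2 -> int}) x, (f + g) x = f x + g x by move=> f g x; rewrite ffunE.
move: (bern_div (Gr fa fb) v [set t]) (fun u => bd_val fa fb v e0 t u C1 Hp) => X1 E1.
move: (bern_div (Gr fa fb) v [set t']) (fun u => bd_val fa fb v e0 t' u C1 Hp) => X2 E2.
move: (bern_div (Gr fa' fb') v [set t]) (fun u => bd_val fa' fb' v e0 t u C2 Hp') => Y1 F1.
move: (bern_div (Gr fa' fb') v [set t']) (fun u => bd_val fa' fb' v e0 t' u C2 Hp') => Y2 F2.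
split=> -[_ H]; split=> //; move/div_char: H => H; apply/div_char; move: H;
  rewrite !addf !E1 !E2 !F1 !F2 !EG.
  exact: (iffRL Hb).
exact: (iffLR Hb).
Qed.

Definition c2body v e0 t t' : bool :=
  (((cnt A3f B3f v e0 t' (o2 1) + 2 * cnt Af Bf v e0 t (o2 1)) %% 5 ==
   (cnt A3f B3f v e0 t (o2 1) + 2 * cnt Af Bf v e0 t' (o2 1)) %% 5) &&
  (cnt Af Bf v e0 t (o2 0) + cnt Af Bf v e0 t (o2 1) == 4) &&
  (cnt A3f B3f v e0 t (o2 0) + cnt A3f B3f v e0 t (o2 1) == 4))%N.
Definition c2d v e0 t := allI5 (c2body v e0 t).
Definition c2c v e0 := allI5 (c2d v e0).
Definition c2b v := allI5 (c2c v).
Lemma ok2 : allI2 c2b. Proof. vm_compute. reflexivity. Qed.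
Lemma c2_all v e0 t t' : c2body v e0 t t'.
Proof.
exact: (@allI5P (c2body v e0 t) (@allI5P (c2d v e0) (@allI5P (c2c v) (allI2P ok2 v) e0) t) t').
Qed.

Lemma check2_all v e0 t t' :
    [/\ ((cnt A3f B3f v e0 t' (o2 1) + 2 * cnt Af Bf v e0 t (o2 1)) %% 5 =
         (cnt A3f B3f v e0 t (o2 1) + 2 * cnt Af Bf v e0 t' (o2 1)) %% 5)%N,
        (cnt Af Bf v e0 t (o2 0) + cnt Af Bf v e0 t (o2 1) = 4)%N &
        (cnt A3f B3f v e0 t (o2 0) + cnt A3f B3f v e0 t (o2 1) = 4)%N].
Proof.
have := c2_all v e0 t t'; rewrite /c2body.
move=> /andP[/andP[/eqP H1 /eqP H2] /eqP H3]; split; [exact: H1 | exact: H2 | exact: H3].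
Qed.

Local Open Scope ring_scope.

Theorem theorem1p5 (alpha : torsor_kind) :
  exists (n m m' : nat) (G : ribbon_graph 'I_n 'I_m) (G' : ribbon_graph 'I_n 'I_m')
         (phi : {set 'I_m} -> {set 'I_m'})
         (gamma : {ffun 'I_n -> int} -> {ffun 'I_n -> int}),
    [/\ is_ribbon_graph G, is_ribbon_graph G' & genus G != genus G'] /\
    (* phi : T(G) -> T(G') is a bijection *)
    [/\ (forall T, spanning_tree G T -> spanning_tree G' (phi T)),
        (forall T1 T2, spanning_tree G T1 -> spanning_tree G T2 ->
                       phi T1 = phi T2 -> T1 = T2) &
        (forall T', spanning_tree G' T' -> exists2 T, spanning_tree G T & phi T = T')] /\
    (* gamma induces a group isomorphism Pic^0(G) -> Pic^0(G') *)
    [/\ (forall D, deg_div D = 0 -> deg_div (gamma D) = 0),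
        (forall D1 D2, deg_div D1 = 0 -> deg_div D2 = 0 ->
           div_equiv G D1 D2 -> div_equiv G' (gamma D1) (gamma D2)),
        (forall D1 D2, deg_div D1 = 0 -> deg_div D2 = 0 ->
           div_equiv G' (gamma (D1 + D2)) (gamma D1 + gamma D2)),
        (forall D1 D2, deg_div D1 = 0 -> deg_div D2 = 0 ->
           div_equiv G' (gamma D1) (gamma D2) -> div_equiv G D1 D2) &
        (forall D', deg_div D' = 0 ->
           exists2 D, deg_div D = 0 & div_equiv G' (gamma D) D')] /\
    (* compatibility of the torsors *)
    (forall (v : 'I_n) (D : {ffun 'I_n -> int}) (T : {set 'I_m}),
       deg_div D = 0 -> spanning_tree G T ->
       phi (torsor alpha G v D T) = torsor alpha G' v (gamma D) (phi T)).
Proof.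
exists 2%N, 5%N, 5%N, (Gr Af Bf), (Gr A3f B3f), (fun T => T), gam.
split; [|split; [|split]].
- split; [exact: ribbonG | exact: ribbonG' |].
  by rewrite genusG; apply/eqP => H; have := genusG'; rewrite -H.
- split.
  + by move=> T; rewrite !spanE.
  + by [].
  + by move=> T' HT; exists T'; rewrite // spanE -(spanE A3f B3f).
- split.
  + move=> D; rewrite !deg2 /gam !ffunE; move: (D (o2 0)) (D (o2 1)) => a b; lia.
  + move=> D1 D2 _ _ /div_char [Hs [q Hq]]; apply/div_char; rewrite /gam !ffunE.
    move: Hs Hq; move: (D1 (o2 0)) (D1 (o2 1)) (D2 (o2 0)) (D2 (o2 1)) => a b c d Hs Hq.
    by split; [lia | exists (2 * q); lia].
  + move=> D1 D2 _ _; apply/div_char; rewrite /gam !ffunE.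
    move: (D1 (o2 0)) (D1 (o2 1)) (D2 (o2 0)) (D2 (o2 1)) => a b c d.
    by split; [lia | exists 0; lia].
  + move=> D1 D2 _ _ /div_char [Hs [q Hq]]; apply/div_char; move: Hs Hq; rewrite /gam !ffunE.
    move: (D1 (o2 0)) (D1 (o2 1)) (D2 (o2 0)) (D2 (o2 1)) => a b c d Hs Hq.
    by split; [lia | exists (3 * q - (b - d)); lia].
  + move=> D' Hd; exists [ffun u => 3 * D' u].
      by move: Hd; rewrite !deg2 !ffunE; move: (D' (o2 0)) (D' (o2 1)) => a b; lia.
    apply/div_char; move: Hd; rewrite deg2 /gam !ffunE.
    move: (D' (o2 0)) (D' (o2 1)) => a b Hd.
    by split; [lia | exists b; lia].
move=> v D T Hd HT /=.
have [t ->] : exists t, T = [set t] by move: HT; rewrite spanE => /cards1P.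
have uv := ot_neq v; move: (ot v) uv => u uv.
have Hd' : deg_div (gam D) = 0.
  by move: Hd; rewrite !deg2 /gam !ffunE; move: (D (o2 0)) (D (o2 1)) => a b; lia.
case: alpha => /=.
  have [k [q Hq]] := rep5 (D u).
  have Hq' : ((2 * k)%N)%:Z - gam D u = (2 * q) * 5.
    by rewrite /gam ffunE; move: Hq; move: (D u) => d; lia.
  rewrite (rotor_val Af Bf v D t u k uv Hd (ex_intro _ q Hq) (Ru_per _ _ _ perA perB)).
  rewrite (rotor_val A3f B3f v (gam D) t u (2 * k) uv Hd' (ex_intro _ _ Hq')
             (Ru_per _ _ _ perA3 perB3)).
  have E : Ru A3f B3f u =1 iter 3 (Ru Af Bf u).
    by rewrite /Ru; case: (u == o2 1) => x; [exact: B3E | exact: A3E].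
  rewrite (eq_iter E) -iterM (@iter_mod5 _ (Ru_per _ _ _ perA perB) (2 * k * 3))
          (@iter_mod5 _ (Ru_per _ _ _ perA perB) k).
  have -> : ((2 * k * 3) %% 5 = k %% 5)%N by lia.
  by [].
rewrite /bernardi_torsor (@bern_pred_eq Af Bf A3f B3f check1G check1G' check2_all v t D Hd); by [].
Qed.
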